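(* Let $G=(V,E)$ be an $n$-node graph with maximum degree at most $\Delta$ and exact maximum degree $\Delta^*\le\Delta$, and let $S\subseteq V$ be a node set in which every node has degree at least $\delta_S$. For every $\varepsilon>0$ there is a deterministic LOCAL algorithm with round complexity $T_{AM}(\varepsilon)$ that computes a matching of $G$ hitting at least a $(1-\varepsilon)\cdot\frac{\delta_S}{\Delta^*+1}$-fraction of the nodes in $S$.
   Context: LOCAL model: synchronous rounds on the $n$-node network graph, unique $O(\log n)$-bit identifiers, unbounded message size and local computation; each node knows whether it belongs to $S$. A matching hits a node if the node is an endpoint of one of its edges. $T_{AM}(\varepsilon)$ denotes the round complexity of a deterministic LOCAL algorithm that, on any $n$-node graph of maximum degree at most $\Delta$ with positive edge weights whose ratio of maximum to minimum weight is $n^{O(1)}$, computes a matching which is maximal and whose weight is at least $(1-\varepsilon)$ times the weight of a maximum-weight matching. *)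

(* Defs.v *)
From HB Require Import structures.
From mathcomp Require Import all_boot all_order all_algebra.
Set Implicit Arguments. Unset Strict Implicit. Unset Printing Implicit Defensive.
Import Order.TTheory GRing.Theory Num.Theory.

(* An n-node simple graph whose node identifiers are < n^k
   (i.e. O(log n)-bit identifiers, k a constant). *)
Definition simple_graph (n k : nat) (V : seq nat) (E : rel nat) : Prop :=
  [/\ uniq V, size V = n & {in V, forall v, v < n ^ k}] /\
  [/\ (forall x y, E x y -> (x \in V) && (y \in V)),
      (forall x, ~~ E x x) & (forall x y, E x y = E y x)].

Definition deg (V : seq nat) (E : rel nat) (v : nat) : nat := count (E v) V.

Definition max_deg (V : seq nat) (E : rel nat) : nat := \max_(v <- V) deg V E v.

Definition max_deg_le (V : seq nat) (E : rel nat) (D : nat) : Prop :=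
  {in V, forall v, deg V E v <= D}.

Fixpoint ball (V : seq nat) (E : rel nat) (r v : nat) : seq nat :=
  match r with
  | 0 => [:: v]
  | r'.+1 => let B := ball V E r' v in
             [seq u <- V | (u \in B) || has (fun x => E x u) B]
  end.

(* Two labelled instances look identical to node v after T rounds:
   same node labels (inputs) on the radius-T ball, and same edges (with
   the same edge labels) incident to the radius-(T-1) ball. *)
Definition same_view (NL EL : Type) (T v : nat)
  (V1 : seq nat) (E1 : rel nat) (nl1 : nat -> NL) (el1 : nat -> nat -> EL)
  (V2 : seq nat) (E2 : rel nat) (nl2 : nat -> NL) (el2 : nat -> nat -> EL) : Prop :=
  (forall u, u \in ball V1 E1 T v -> nl1 u = nl2 u) /\
  (forall x y, 0 < T -> x \in ball V1 E1 T.-1 v ->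
     E1 x y = E2 x y /\ (E1 x y -> el1 x y = el2 x y)).

(* Outputs are matching partners. *)
Definition algo (NL EL : Type) :=
  seq nat -> rel nat -> (nat -> NL) -> (nat -> nat -> EL) -> nat -> option nat.

Definition local_alg (NL EL : Type)
  (P : seq nat -> rel nat -> (nat -> NL) -> (nat -> nat -> EL) -> Prop)
  (T : nat) (A : algo NL EL) : Prop :=
  forall V1 E1 nl1 el1 V2 E2 nl2 el2 v,
    P V1 E1 nl1 el1 -> P V2 E2 nl2 el2 -> v \in V1 -> v \in V2 ->
    same_view T v V1 E1 nl1 el1 V2 E2 nl2 el2 ->
    A V1 E1 nl1 el1 v = A V2 E2 nl2 el2 v.

Local Open Scope ring_scope.

Definition is_matching (V : seq nat) (E : rel nat) (M : nat -> option nat) : Prop :=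
  forall v u, v \in V -> M v = Some u -> E v u /\ M u = Some v.

Definition matched (M : nat -> option nat) (v : nat) : bool := M v != None.

Definition is_maximal (E : rel nat) (M : nat -> option nat) : Prop :=
  forall x y, E x y -> matched M x || matched M y.

(* total weight, each matched edge counted once (from its smaller endpoint) *)
Definition mweight (R : numDomainType) (V : seq nat) (w : nat -> nat -> R)
  (M : nat -> option nat) : R :=
  \sum_(v <- V) (match M v with Some u => if (v < u)%N then w v u else 0 | None => 0 end).

Definition AM_class (R : numDomainType) (n k D c : nat)
  (V : seq nat) (E : rel nat) (_ : nat -> unit) (w : nat -> nat -> R) : Prop :=
  [/\ simple_graph n k V E, max_deg_le V E D,
      (forall x y, E x y -> 0 < w x y),
      (forall x y, w x y = w y x) &
      (forall x y x' y', E x y -> E x' y' -> w x y <= (n ^ c)%:R * w x' y')].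

Definition AM_correct (R : numDomainType) (n k D c : nat) (eps : R)
  (A : algo unit R) : Prop :=
  forall V E w, AM_class n k D c V E (fun _ => tt) w ->
    let M := A V E (fun _ => tt) w in
    [/\ is_matching V E M, is_maximal E M &
        forall M', is_matching V E M' -> (1 - eps) * mweight V w M' <= mweight V w M].

(* instances for the lemma: n nodes, max degree <= D, input bit S v *)
Definition S_class (n k D : nat)
  (V : seq nat) (E : rel nat) (_ : nat -> bool) (_ : nat -> nat -> unit) : Prop :=
  simple_graph n k V E /\ max_deg_le V E D.

Definition S_correct (R : numFieldType) (n k D : nat) (eps : R)
  (B : algo bool unit) : Prop :=
  forall V E S, S_class n k D V E S (fun _ _ => tt) ->
    let M := B V E S (fun _ _ => tt) in
    is_matching V E M /\
    forall deltaS : nat, {in V, forall v, S v -> (deltaS <= deg V E v)%N} ->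
      (1 - eps) * (deltaS%:R / (max_deg V E).+1%:R) * (count S V)%:R
        <= (count (fun v => S v && matched M v) V)%:R.

(* Main.v *)
Require Import Defs.
From HB Require Import structures.
From mathcomp Require Import all_boot all_order all_algebra.
From mathcomp Require Import zify.
Set Implicit Arguments. Unset Strict Implicit. Unset Printing Implicit Defensive.

(* Proof outline: reduce to the approximate max-weight matching
   algorithm on the subgraph of edges touching S with weights |e /\ S|; the
   existence of a good comparison matching follows from Vizing's theorem. *)

Section Kempe.
Variables (V : seq nat) (a b : nat -> nat) (u : nat).
Hypotheses (aK : involutive a) (bK : involutive b)
  (aV : forall x, x \in V -> a x \in V) (bV : forall x, x \in V -> b x \in V)
  (uV : u \in V) (au : a u = u).

Definition kp x := a (b x).

Lemma kp_inj : injective kp.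
Proof. by move=> x y /(congr1 a); rewrite !aK => /(congr1 b); rewrite !bK. Qed.

Lemma iter_kp_inj n : injective (iter n kp).
Proof. elim: n => [|n IH] x y //=; by move/kp_inj/IH. Qed.

Lemma iter_kpV n x : x \in V -> iter n kp x \in V.
Proof. by move=> xV; elim: n => //= n IH; rewrite /kp aV // bV. Qed.

Lemma kp_periodic : exists2 L, 0 < L & iter L kp u = u.
Proof.
set s := [seq iter i kp u | i <- iota 0 (size V).+1].
have : ~~ uniq s.
  apply/negP => us; have := uniq_leq_size us.
  have -> : size s = (size V).+1 by rewrite size_map size_iota.
  move=> H; suff : (size V).+1 <= size V by rewrite ltnn.
  apply: H => y /mapP [i _ ->]; exact: iter_kpV.
case/(uniqPn 0) => i [j [ij js]].
have jV : j < (size V).+1 by move: js; rewrite size_map size_iota.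
rewrite !(nth_map 0) ?size_iota //; last by lia.
rewrite !nth_iota //; try lia; rewrite !add0n => e.
exists (j - i); first lia.
apply: (@iter_kp_inj i); rewrite -iterD.
by rewrite (_ : i + (j - i) = j) //; lia.
Qed.

Lemma key k x : iter k kp (b (iter k kp x)) = b x.
Proof.
have h y : kp (b (kp y)) = b y by rewrite /kp bK aK.
elim: k x => [|k IH] x //.
by rewrite iterSr iterS h IH.
Qed.

Lemma iter_mul P q x : iter P kp x = x -> iter (q * P) kp x = x.
Proof. by move=> h; elim: q => //= q IH; rewrite mulSn iterD IH. Qed.

Variable L : nat.
Hypotheses (L0 : 0 < L) (Lu : iter L kp u = u).


Lemma iterL n : iter L kp (iter n kp u) = iter n kp u.
Proof. by rewrite -iterD addnC iterD Lu. Qed.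

Lemma iter_mod n : iter n kp u = iter (n %% L) kp u.
Proof. by rewrite {1}(divn_eq n L) addnC iterD iter_mul. Qed.

Lemma b_next n : iter n.+1 kp (b (iter n kp u)) = u.
Proof. by rewrite iterS key /kp bK au. Qed.

Lemma b_orbit n : exists m, b (iter n kp u) = iter m kp u.
Proof.
set z := b (iter n kp u).
have zL : iter L kp z = z.
  by rewrite /z -{2}(key L (iter n kp u)) iterL.
exists ((n.+1 * L) - n.+1).
rewrite -(b_next n) -iterD.
have -> : (n.+1 * L - n.+1 + n.+1) = n.+1 * L by nia.
by rewrite iter_mul.
Qed.

Lemma a_orbit n : exists m, a (iter n kp u) = iter m kp u.
Proof.
have [m e] := b_orbit n; exists m.+1.
by rewrite iterS -e /kp bK.
Qed.

Lemma endpoint n1 n2 : b (iter n1 kp u) = iter n1 kp u ->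
  b (iter n2 kp u) = iter n2 kp u -> iter n1 kp u = iter n2 kp u.
Proof.
wlog le12 : n1 n2 / n1 <= n2.
  move=> H h1 h2; case: (leqP n1 n2) => [l|l]; first exact: H.
  by apply/esym/H => //; apply: ltnW.
move=> h1 h2.
have p1 : iter (n1.+1 + n1) kp u = u by rewrite iterD -{1}h1 b_next.
have p2 : iter (n2.+1 + n2) kp u = u by rewrite iterD -{1}h2 b_next.
set d := n2 - n1.
have pd : iter (d.*2) kp u = u.
  move: p2; rewrite (_ : n2.+1 + n2 = d.*2 + (n1.+1 + n1)); last by rewrite /d; lia.
  by rewrite iterD p1.
have m0 : 0 < n1.+1 + n1 by [].
have [x _ dv] := Bezoutl (d.*2) m0.
set g := gcdn (n1.+1 + n1) d.*2.
have pg : iter g kp u = u.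
  case/dvdnP: dv => q eq.
  have : iter (g + x * d.*2) kp u = u by rewrite /g eq (iter_mul _ p1).
  by rewrite iterD (iter_mul _ pd).
have gd : g %| d.
  have co : coprime g 2.
    rewrite /coprime; apply/eqP.
    have : gcdn g 2 %| n1.+1 + n1.
      apply: dvdn_trans (dvdn_gcdl _ _) (dvdn_gcdl _ _).
    have : gcdn g 2 %| 2 := dvdn_gcdr _ _.
    have : 0 < gcdn g 2 by rewrite gcdn_gt0 orbT.
    have : gcdn g 2 <= 2 by apply: dvdn_leq => //; apply: dvdn_gcdr.
    move: (gcdn g 2) => [|[|[|k]]] //= _ _ _.
    by rewrite dvdn2 /= oddD /= addbb.
  by rewrite -(Gauss_dvdr _ co) mul2n; apply: dvdn_gcdr.
case/dvdnP: gd => q dq.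
have pd1 : iter d kp u = u by rewrite dq (iter_mul _ pg).
have -> : n2 = n1 + d by rewrite /d; lia.
by rewrite iterD pd1.
Qed.

Definition orb y := has (fun n => iter n kp u == y) (iota 0 L).

Lemma orbP y : reflect (exists n, iter n kp u = y) (orb y).
Proof.
apply: (iffP hasP) => [[n _ /eqP e]|[n e]]; first by exists n.
exists (n %% L); first by rewrite mem_iota add0n ltn_pmod.
by rewrite -iter_mod e.
Qed.

Lemma orb_u : orb u. Proof. by apply/orbP; exists 0. Qed.

Lemma orb_a y : orb y -> orb (a y).
Proof. by case/orbP => n <-; have [m e] := a_orbit n; apply/orbP; exists m. Qed.

Lemma orb_b y : orb y -> orb (b y).
Proof. by case/orbP => n <-; have [m e] := b_orbit n; apply/orbP; exists m. Qed.

Lemma orb_aE y : orb (a y) = orb y.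
Proof. by apply/idP/idP => [/orb_a|/orb_a //]; rewrite aK. Qed.

Lemma orb_bE y : orb (b y) = orb y.
Proof. by apply/idP/idP => [/orb_b|/orb_b //]; rewrite bK. Qed.

Lemma orb_end y1 y2 : orb y1 -> orb y2 -> b y1 = y1 -> b y2 = y2 -> y1 = y2.
Proof. by case/orbP => n1 <-; case/orbP => n2 <-; apply: endpoint. Qed.

End Kempe.

Definition proper (K : nat) (F : rel nat) (col : nat -> nat -> nat) :=
  (forall x y, F x y -> col x y = col y x /\ col x y < K) /\
  (forall x y z, F x y -> F x z -> col x y = col x z -> y = z).

Definition miss (V : seq nat) (F : rel nat) (col : nat -> nat -> nat) x c :=
  ~~ has (fun y => F x y && (col x y == c)) V.

Definition nbr (V : seq nat) (F : rel nat) (col : nat -> nat -> nat) x c :=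
  head x [seq y <- V | F x y && (col x y == c)].

Definition sw (a b c : nat) := if c == a then b else if c == b then a else c.

Lemma swK a b : involutive (sw a b).
Proof. move=> c; rewrite /sw.
case: (eqVneq c a) => [->|ca].
  by case: (eqVneq b a) => [->|ba]; rewrite ?eqxx // (negbTE ba) eqxx.
case: (eqVneq c b) => [e|cb]; first subst c.
  by rewrite eqxx.
by rewrite (negbTE ca) (negbTE cb).
Qed.

Section Col.
Variables (V : seq nat) (K : nat) (F : rel nat) (col : nat -> nat -> nat).
Hypotheses (uV : uniq V) (FV : forall x y, F x y -> x \in V)
  (Fsym : symmetric F) (Firr : irreflexive F) (pc : proper K F col).

Lemma FVr x y : F x y -> y \in V.
Proof. by rewrite Fsym; apply: FV. Qed.

Lemma missP x c : reflect (forall y, F x y -> col x y != c) (miss V F col x c).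
Proof.
apply: (iffP hasPn) => h y; last by move=> _; rewrite negb_and -implybE; apply/implyP; apply: h.
by move=> Fxy; have := h y (FVr Fxy); rewrite Fxy.
Qed.

Lemma col_inj x y z : F x y -> F x z -> col x y = col x z -> y = z.
Proof. by case: pc => _; apply. Qed.

Lemma col_sym x y : F x y -> col x y = col y x.
Proof. by case: pc => h _ /h []. Qed.

Lemma col_lt x y : F x y -> col x y < K.
Proof. by case: pc => h _ /h []. Qed.

Lemma nbr_eq x y c : F x y -> col x y = c -> nbr V F col x c = y.
Proof.
move=> Fxy e; rewrite /nbr.
have : y \in [seq y <- V | F x y && (col x y == c)] by rewrite mem_filter Fxy e eqxx (FVr Fxy).
case E: [seq y <- V | _] => [//|z s] _ /=.
have : z \in [seq y <- V | F x y && (col x y == c)] by rewrite E mem_head.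
rewrite mem_filter => /andP [/andP [Fxz /eqP ez] _].
by apply: col_inj Fxz Fxy _; rewrite ez e.
Qed.

Lemma nbr_miss x c : miss V F col x c -> nbr V F col x c = x.
Proof. by rewrite /miss /nbr has_filter negbK => /eqP ->. Qed.

Lemma nbr_spec x c : (F x (nbr V F col x c) /\ col x (nbr V F col x c) = c) \/
   (miss V F col x c /\ nbr V F col x c = x).
Proof.
case m: (miss V F col x c); first by right; rewrite nbr_miss.
left; move: m; rewrite /miss /nbr has_filter negbK.
case e: [seq y <- V | _] => [//|z s] _ /=.
have : z \in [seq y <- V | F x y && (col x y == c)] by rewrite e mem_head.
by rewrite mem_filter => /andP [/andP [-> /eqP ->]].
Qed.

Lemma nbr_inv c : involutive (fun x => nbr V F col x c).
Proof.
move=> x; case: (nbr_spec x c) => [[Fxy e]|[_ e]]; last by rewrite !e.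
by apply: nbr_eq; rewrite 1?Fsym // -col_sym.
Qed.

Lemma nbr_V x c : x \in V -> nbr V F col x c \in V.
Proof. by move=> xV; case: (nbr_spec x c) => [[Fxy _]|[_ ->]] //; apply: FVr Fxy. Qed.

Lemma nbr_fix x c : nbr V F col x c = x -> miss V F col x c.
Proof. by case: (nbr_spec x c) => [[Fxy _] e|[]//]; move: Fxy; rewrite e Firr. Qed.

Definition mc x := nth 0 [seq c <- iota 0 K | miss V F col x c] 0.

Lemma mc_spec x : count (F x) V < K -> mc x < K /\ miss V F col x (mc x).
Proof.
move=> cK.
have : has (miss V F col x) (iota 0 K).
  apply/negPn/negP => /hasPn h.
  have : {subset iota 0 K <= [seq col x y | y <- [seq y <- V | F x y]]}.
    move=> c cI; have := h c cI; rewrite negbK => /hasP [y yV /andP [Fxy /eqP <-]].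
    by apply: map_f; rewrite mem_filter Fxy.
  move/(uniq_leq_size (iota_uniq 0 K)); rewrite size_map size_filter size_iota.
  by rewrite leqNgt cK.
rewrite has_filter /mc; case e: [seq c <- iota 0 K | _] => [//|c s] _ /=.
have : c \in [seq c <- iota 0 K | miss V F col x c] by rewrite e mem_head.
by rewrite mem_filter mem_iota add0n => /andP [-> /andP [_ ->]].
Qed.

Section Swap.
Variables (al be : nat) (O : pred nat).
Hypotheses (alK : al < K) (beK : be < K) (ab : al != be)
  (Oal : forall x y, F x y -> col x y = al -> O x = O y)
  (Obe : forall x y, F x y -> col x y = be -> O x = O y).

Definition swcol x y := if O x then col x y else sw al be (col x y).

Lemma sw_lt c : c < K -> sw al be c < K.
Proof. by rewrite /sw; case: ifP => //; case: ifP. Qed.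

Lemma swcol_proper : proper K F swcol.
Proof.
split.
  move=> x y Fxy; rewrite /swcol; split; last by case: ifP => _; [|apply: sw_lt]; apply: col_lt.
  case Ox: (O x); case Oy: (O y); rewrite -?(col_sym Fxy) //.
  - rewrite /sw; case: eqP => [e|_]; first by move: Ox Oy; rewrite (Oal Fxy e) => ->.
    by case: eqP => [e|_] //; move: Ox Oy; rewrite (Obe Fxy e) => ->.
  - rewrite /sw; case: eqP => [e|_]; first by move: Ox Oy; rewrite (Oal Fxy e) => ->.
    by case: eqP => [e|_] //; move: Ox Oy; rewrite (Obe Fxy e) => ->.
move=> x y z Fxy Fxz; rewrite /swcol; case: ifP => _; first exact: col_inj.
by move/(can_inj (swK al be)); apply: col_inj.
Qed.

Lemma swmiss x c : miss V F swcol x c = (if O x then miss V F col x c else miss V F col x (sw al be c)).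
Proof.
rewrite /miss /swcol; case: ifP => // _; congr (~~ _); apply: eq_has => y.
by congr (_ && _); apply/eqP/eqP => [<-|->]; rewrite swK.
Qed.

End Swap.

Section Shift.
Variables (u v0 : nat) (f : nat -> nat) (r : nat) (mm : nat -> nat) (g : nat).
Hypotheses (uv0 : u != v0) (nF : ~~ F u v0) (f0 : f 0 = v0)
  (fF : forall i, 0 < i <= r -> F u (f i))
  (finj : forall i j, i <= r -> j <= r -> f i = f j -> i = j)
  (flink : forall i, i < r -> col u (f i.+1) = mm (f i))
  (fmiss : forall i, i < r -> miss V F col (f i) (mm (f i)))
  (gK : g < K) (gu : miss V F col u g) (gr : miss V F col (f r) g).

Definition Fp x y := F x y || (x == u) && (y == v0) || (x == v0) && (y == u).
Definition infan y := has (fun i => f i == y) (iota 0 r.+1).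
Definition nc y := if y == f r then g else mm y.
Definition shcol x y :=
  if (x == u) && infan y then nc y else if (y == u) && infan x then nc x else col x y.

Lemma infanP y : reflect (exists2 i, i <= r & f i = y) (infan y).
Proof.
apply: (iffP hasP) => [[i] | [i ir <-]].
  by rewrite mem_iota add0n ltnS => ir /eqP <-; exists i.
by exists i; rewrite ?mem_iota ?add0n ?ltnS.
Qed.

Lemma fneu i : i <= r -> f i != u.
Proof.
case: i => [|i] ir; first by rewrite f0 eq_sym.
by apply/eqP => e; have := fF (i:=i.+1) ir; rewrite e Firr.
Qed.

Lemma infan_u : ~~ infan u.
Proof. by apply/infanP => [[i ir /eqP]]; rewrite (negbTE (fneu ir)). Qed.

Lemma infan_v0 : infan v0.
Proof. by apply/infanP; exists 0. Qed.

Lemma nc_miss y : infan y -> miss V F col y (nc y).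
Proof.
case/infanP => i ir <-; rewrite /nc; case: eqP => [->//|ne].
apply: fmiss; rewrite ltn_neqAle ir andbT; apply/eqP => e; apply: ne; by rewrite e.
Qed.

Lemma nc_u y : infan y -> (y = f r /\ nc y = g) \/ (exists2 i, i < r & y = f i /\ nc y = col u (f i.+1)).
Proof.
case/infanP => i ir <-; rewrite /nc; case: eqP => [e|ne]; first by left.
right; exists i; last by rewrite flink //; rewrite ltn_neqAle ir andbT; apply/eqP => e; apply: ne; rewrite e.
by rewrite ltn_neqAle ir andbT; apply/eqP => e; apply: ne; rewrite e.
Qed.

Lemma nc_lt y : infan y -> nc y < K.
Proof. by case/nc_u => [[_ ->]//|[i ir [_ ->]]]; apply: col_lt; apply: fF; rewrite ir. Qed.

Lemma Fp_irr x : ~~ Fp x x.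
Proof.
rewrite /Fp Firr /= andbC orbb; apply/negP => /andP [/eqP e1 /eqP e2]; move: uv0; by rewrite -e1 e2 eqxx.
Qed.

Lemma Fp_F x y : x != u -> y != u -> Fp x y -> F x y.
Proof. by move=> xu yu; rewrite /Fp (negbTE xu) (negbTE yu) /= ?andbF ?orbF. Qed.

Lemma Fp_uF y : Fp u y -> ~~ infan y -> F u y.
Proof.
rewrite /Fp eqxx /= => /orP [/orP [//|/eqP ->]|/andP [/eqP e _]].
  by rewrite infan_v0.
by move: uv0; rewrite e eqxx.
Qed.

Lemma Fp_sym : symmetric Fp.
Proof. by move=> x y; rewrite /Fp Fsym orbAC; congr (_ || _ || _); rewrite andbC. Qed.

Lemma shcol_sym x y : Fp x y -> shcol x y = shcol y x.
Proof.
move=> Fxy; rewrite /shcol.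
case: (eqVneq x u) => [ex|xu]; first subst x.
  rewrite !andTb (negbTE infan_u) andbF.
  case iy: (infan y); first by [].
  have Fuy := Fp_uF Fxy (negbT iy).
  exact: col_sym.
case: (eqVneq y u) => [ey|yu]; first subst y.
  rewrite !andTb (negbTE infan_u) andbF.
  case ix: (infan x) => //.
  by apply: col_sym; rewrite Fsym; apply: Fp_uF; [rewrite Fp_sym | rewrite ix].
by rewrite !andFb; apply: col_sym; apply: Fp_F.
Qed.

Lemma Fp_col x y : Fp x y -> ~~ ((x == u) && infan y) -> ~~ ((y == u) && infan x) -> F x y.
Proof.
move=> Fxy h1 h2.
case: (eqVneq x u) => [ex|xu]; first by subst x; apply: Fp_uF; rewrite eqxx andTb in h1.
case: (eqVneq y u) => [ey|yu]; last by apply: Fp_F.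
subst y; rewrite Fsym; apply: Fp_uF; first by rewrite Fp_sym.
by rewrite eqxx andTb in h2.
Qed.

Lemma shcol_u w : shcol u w = if infan w then nc w else col u w.
Proof. by rewrite /shcol eqxx andTb (negbTE infan_u) andbF; case: ifP. Qed.

Lemma shcol_nu x w : x != u -> shcol x w = if (w == u) && infan x then nc x else col x w.
Proof. by move=> xu; rewrite /shcol (negbTE xu) andFb. Qed.

Lemma nc_inj y z : infan y -> infan z -> nc y = nc z -> y = z.
Proof.
have H1 j : j < r -> g != col u (f j.+1).
  move=> jr; apply/eqP => e.
  have Fj : F u (f j.+1) by apply: fF; rewrite jr.
  by move/missP: gu => /(_ _ Fj); rewrite e eqxx.
move=> /nc_u [[-> ->]|[i ir [-> ->]]] /nc_u [[-> ->]|[j jr [-> ->]]] //.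
- by move=> e; move: (H1 _ jr); rewrite e eqxx.
- by move=> e; move: (H1 _ ir); rewrite e eqxx.
move/(col_inj (fF _) (fF _)); rewrite ir jr => /(_ isT isT) /finj; rewrite ir jr => /(_ isT isT).
by case=> ->.
Qed.

Lemma nc_out y z : infan y -> ~~ infan z -> F u z -> nc y != col u z.
Proof.
move=> /nc_u [[_ ->]|[i ir [_ ->]]] iz Fuz; apply/eqP => e.
  by move/missP: gu => /(_ z Fuz); rewrite e eqxx.
have := col_inj (fF (i:=i.+1) _) Fuz e; rewrite ir => /(_ isT) ez.
by move: iz; rewrite -ez; case/negP; apply/infanP; exists i.+1.
Qed.

Lemma shcol_proper : proper K Fp shcol.
Proof.
split.
  move=> x y Fxy; split; first exact: shcol_sym.
  rewrite /shcol; case: ifP => [/andP [_ /nc_lt] //|h1]; case: ifP => [/andP [_ /nc_lt] //|h2].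
  by apply: col_lt; apply: Fp_col; rewrite ?h1 ?h2.
move=> x y z Fxy Fxz.
case: (eqVneq x u) => [ex|xu].
  subst x; rewrite !shcol_u.
  case iy: (infan y); case iz: (infan z).
  - exact: nc_inj.
  - by move=> e; move: (nc_out iy (negbT iz) (Fp_uF Fxz (negbT iz))); rewrite e eqxx.
  - by move=> e; move: (nc_out iz (negbT iy) (Fp_uF Fxy (negbT iy))); rewrite e eqxx.
  - by apply: col_inj; apply: Fp_uF; rewrite ?iy ?iz.
rewrite !shcol_nu //.
have Fxw w : w != u -> Fp x w -> F x w by move=> wu; apply: Fp_F.
have Hu w : w != u -> Fp x w -> Fp x u -> (if infan x then nc x else col x u) != col x w.
  move=> wu Fxw' Fxu; case: ifP => ix.
    by apply/eqP => e; move: (nc_miss ix) => /missP /(_ w (Fp_F xu wu Fxw')); rewrite e eqxx.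
  have Fxu' : F x u by apply: Fp_col; rewrite ?ix ?andbF ?(negbTE xu).
  apply/eqP => /(col_inj Fxu' (Fp_F xu wu Fxw')) e.
  by move: wu; rewrite -e eqxx.
case: (eqVneq y u) => [ey|yu]; case: (eqVneq z u) => [ez|zu]; rewrite ?andTb ?andFb.
- by rewrite ey ez.
- by subst y => e; move: (Hu z zu Fxz Fxy); rewrite e eqxx.
- by subst z => e; move: (Hu y yu Fxy Fxz); rewrite e eqxx.
- by apply: col_inj; apply: Fp_F.
Qed.

End Shift.
End Col.

Section Ext.
Variables (V : seq nat) (K : nat) (F : rel nat) (col : nat -> nat -> nat) (u v0 : nat).
Hypotheses (uV : uniq V) (FV : forall x y, F x y -> x \in V)
  (Fsym : symmetric F) (Firr : irreflexive F) (pc : proper K F col)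
  (uinV : u \in V) (uv0 : u != v0) (nF : ~~ F u v0)
  (degK : forall x, count (F x) V < K).

Let m := mc V K F col.

Definition FanI (f : nat -> nat) k :=
  [/\ f 0 = v0, (forall i, 0 < i <= k -> F u (f i)),
      (forall i j, i <= k -> j <= k -> f i = f j -> i = j) &
      (forall i, i < k -> col u (f i.+1) = m (f i))].

Definition Term (f : nat -> nat) k :=
  miss V F col u (m (f k)) \/ exists2 j, 0 < j <= k & col u (f j) = m (f k).

Lemma fan_bound f k : FanI f k -> k <= count (F u) V.
Proof.
case=> _ fF finj _.
have us : uniq [seq f i | i <- iota 1 k].
  rewrite map_inj_in_uniq ?iota_uniq // => i j; rewrite !mem_iota => /andP [i1 ik] /andP [j1 jk].
  by apply: finj; lia.
have := uniq_leq_size us; rewrite size_map size_iota -size_filter; apply.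
move=> y /mapP [i]; rewrite mem_iota => /andP [i1 ik] ->.
have Fi : F u (f i) by apply: fF; lia.
by rewrite mem_filter Fi (FVr FV Fsym Fi).
Qed.

Lemma fan_step f k : FanI f k -> Term f k \/ exists f', FanI f' k.+1.
Proof.
case=> f0 fF finj flink.
case T1 : (miss V F col u (m (f k))); first by left; left.
case T2 : (has (fun j => col u (f j) == m (f k)) (iota 1 k)).
  left; right; case/hasP: T2 => j; rewrite mem_iota => /andP [j1 jk] /eqP e.
  by exists j => //; lia.
right.
set y := nbr V F col u (m (f k)).
have [Fuy cuy] : F u y /\ col u y = m (f k).
  case: (nbr_spec V F col u (m (f k))) => [//|[]]; by rewrite T1.
have yf i : i <= k -> f i != y.
  case: i => [|i] ik; first by rewrite f0; apply/eqP => e; move: nF; rewrite e Fuy.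
  apply/eqP => e; move/negbT/hasPn: T2 => /(_ i.+1); rewrite mem_iota e cuy eqxx.
  by move=> h; have : false by apply: h; apply/andP; split; lia.
exists (fun i => if i == k.+1 then y else f i); split.
- by rewrite f0.
- move=> i /andP [i0 ik]; case: eqP => // /eqP ne; apply: fF; lia.
- move=> i j ik jk; case: eqP => [->|/eqP ie]; case: eqP => [->|/eqP je] //.
  + by move=> e; move: (yf j ltac:(lia)); rewrite e eqxx.
  + by move=> e; move: (yf i ltac:(lia)); rewrite e eqxx.
  + apply: finj; lia.
- move=> i ik; case: (eqVneq i k) => [->|ne].
    by rewrite eqxx ltn_eqF // cuy.
  have -> : (i.+1 == k.+1) = false by apply/eqP; lia.
  have -> : (i == k.+1) = false by apply/eqP; lia.
  apply: flink; lia.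
Qed.

Lemma fan_exists : exists f k, FanI f k /\ Term f k.
Proof.
suff H : forall n f k, FanI f k -> count (F u) V - k <= n -> exists f k, FanI f k /\ Term f k.
  apply: (H (count (F u) V) (fun _ => v0) 0); last by rewrite subn0.
  split => //.
  - by move=> i /andP [a b]; exfalso; lia.
  - by move=> i j; rewrite !leqn0 => /eqP -> /eqP ->.
elim=> [|n IH] f k fI dk; case: (fan_step fI) => [T|[f' fI']]; try by exists f, k.
  by have := fan_bound fI'; lia.
by apply: (IH f' k.+1 fI'); lia.
Qed.

Lemma extend : exists col', proper K (Fp F u v0) col'.
Proof.
have [f [k [[f0 fF finj flink] T]]] := fan_exists.
have mspec x := mc_spec col (degK x).
case: T => [T|[j /andP [j0 jk] cj]].
  exists (shcol col u f k m (m (f k))).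
  apply: (shcol_proper FV Fsym Firr pc uv0 f0 fF finj flink).
  - by move=> i _; exact: (mspec (f i)).2.
  - exact: (mspec _).1.
  - exact: T.
  - exact: (mspec _).2.
set al := m u; set be := m (f k).
have [alK alm] := mspec u; have [beK bem] := mspec (f k).
pose a := fun x => nbr V F col x al.
pose b := fun x => nbr V F col x be.
have aK : involutive a := nbr_inv FV Fsym pc al.
have bK : involutive b := nbr_inv FV Fsym pc be.
have aV x : x \in V -> a x \in V := fun xV => nbr_V col FV Fsym al xV.
have bV x : x \in V -> b x \in V := fun xV => nbr_V col FV Fsym be xV.
have au : a u = u := nbr_miss alm.
have [L L0 Lu] := kp_periodic aK bK aV bV uinV au.
pose O := orb a b u L.
have Oa x y : F x y -> col x y = al -> O x = O y.
  move=> Fxy e; have <- : a x = y := nbr_eq FV Fsym pc Fxy e.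
  by rewrite /O (orb_aE aK bK uinV au L0 Lu).
have Ob x y : F x y -> col x y = be -> O x = O y.
  move=> Fxy e; have <- : b x = y := nbr_eq FV Fsym pc Fxy e.
  by rewrite /O (orb_bE aK bK uinV au L0 Lu).
have Ou : O u := orb_u L0 Lu.
pose jj := j.-1.
have jjk : jj < k by rewrite /jj; lia.
have jjj : jj.+1 = j by rewrite /jj; lia.
have mjj : m (f jj) = be by rewrite -flink // jjj cj.
pose r := if O (f jj) then k else jj.
have rk : r <= k by rewrite /r; case: ifP => _ //; apply: ltnW.
have Ofr : ~~ O (f r).
  rewrite /r; case: ifP => [Ojj|->//]; apply/negP => Ok.
  have bjj : b (f jj) = f jj by apply: nbr_miss; rewrite -mjj; exact: (mspec _).2.
  have bk : b (f k) = f k := nbr_miss bem.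
  have := orb_end aK bK uinV au L0 Lu Ojj Ok bjj bk.
  by move/finj; rewrite (ltnW jjk) leqnn => /(_ isT isT); lia.
have mr : m (f r) = be by rewrite /r; case: ifP.
exists (shcol (swcol col al be O) u f r m al).
have pc' := swcol_proper pc alK beK Oa Ob.
have swu y : swcol col al be O u y = col u y by rewrite /swcol Ou.
apply: (shcol_proper FV Fsym Firr pc' uv0 f0 _ _ _ _ alK _ _).
- move=> i /andP [i0 ir]; apply: fF; lia.
- move=> i i' ir ir'; apply: finj; lia.
- move=> i ir; rewrite swu; apply: flink; lia.
- move=> i ir; rewrite swmiss; case: ifP => Oi; first exact: (mspec _).2.
  have Fi : F u (f i.+1) by apply: fF; lia.
  have c1 : m (f i) != al.
    rewrite -flink; last by lia.
    by move/(missP col FV Fsym): alm => /(_ _ Fi).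
  have c2 : m (f i) != be.
    apply/eqP; rewrite -flink; last by lia.
    rewrite /be -cj => e.
    have Fj : F u (f j) by apply: fF; lia.
    have := col_inj pc Fi Fj e => /finj h.
    have ij : i = jj by move: h; rewrite /jj; lia.
    by move: ir Oi; rewrite /r ij; case: (O (f jj)); rewrite ?ltnn.
  by rewrite /sw (negbTE c1) (negbTE c2); exact: (mspec _).2.
- by rewrite swmiss Ou.
- by rewrite swmiss (negbTE Ofr) /sw eqxx; move: (mspec (f r)).2; rewrite -/(m (f r)) mr.
Qed.

End Ext.

Lemma proper_ext K (F1 F2 : rel nat) col : (forall x y, F1 x y = F2 x y) ->
  proper K F1 col -> proper K F2 col.
Proof.
move=> e [h1 h2]; split => [x y|x y z]; rewrite -!e; [exact: h1|exact: h2].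
Qed.

Lemma count_lt_sub (T : eqType) (a1 a2 : pred T) s x :
  subpred a1 a2 -> x \in s -> a2 x -> ~~ a1 x -> count a1 s < count a2 s.
Proof.
move=> sub; elim: s => [//|y s IH]; rewrite inE /= => /orP [/eqP <-|xs] a2x a1x.
  by rewrite (negbTE a1x) a2x add0n add1n ltnS; apply: sub_count.
have := IH xs a2x a1x; case: (a1 y) (sub y) => [-> //|_]; case: (a2 y) => /=; lia.
Qed.

Lemma sum_lt_sub (T : eqType) (f g : T -> nat) s x :
  (forall y, f y <= g y) -> x \in s -> f x < g x ->
  \sum_(y <- s) f y < \sum_(y <- s) g y.
Proof.
move=> le; elim: s => [//|y s IH]; rewrite inE !big_cons => /orP [/eqP <-|xs] lt.
  by rewrite -addSn leq_add // leq_sum.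
by rewrite -addnS leq_add // IH.
Qed.

Lemma vizing (V : seq nat) (D : nat) (F : rel nat) : uniq V ->
  (forall x y, F x y -> x \in V) -> symmetric F -> irreflexive F ->
  (forall x, count (F x) V <= D) -> exists col, proper D.+1 F col.
Proof.
move=> uV.
suff H : forall N (F : rel nat), (forall x y, F x y -> x \in V) -> symmetric F -> irreflexive F ->
  (forall x, count (F x) V <= D) -> \sum_(x <- V) count (F x) V <= N -> exists col, proper D.+1 F col.
  by move=> FV Fs Fi Fd; apply: (H _ F FV Fs Fi Fd (leqnn _)).
elim=> [|N IH] {}F FV Fsym Firr Fdeg Fm;
  (case Hedge: (has (fun x => has (F x) V) V); last first);
  try (exists (fun _ _ => 0); split => [x y Fxy|x y z Fxy];
       by move/negbT/hasPn: Hedge => /(_ x (FV _ _ Fxy)) /hasPn /(_ y (FVr FV Fsym Fxy)); rewrite Fxy).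
all: case/hasP: Hedge => u uinV /hasP [v0 v0V Fuv].
all: pose F0 := fun x y => F x y && ~~ ((x == u) && (y == v0) || (x == v0) && (y == u)).
all: have F0F x y : F0 x y -> F x y by case/andP.
all: have F0V : forall x y, F0 x y -> x \in V by move=> x y /F0F /FV.
all: have F0s : symmetric F0.
all: try (move=> x y; rewrite /F0 Fsym; congr (_ && ~~ _); rewrite orbC;
          by congr (_ || _); rewrite andbC).
all: have F0i : irreflexive F0 by move=> x; rewrite /F0 Firr.
all: have F0d x : count (F0 x) V <= D by apply: leq_trans (Fdeg x); apply: sub_count => y /F0F.
all: have F0m : \sum_(x <- V) count (F0 x) V < \sum_(x <- V) count (F x) V.
all: try (apply: (sum_lt_sub (x:=u)) => //;
   [by move=> y; apply: sub_count => z /F0F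
   | by apply: (count_lt_sub (x:=v0)) => //; [move=> z /F0F | rewrite /F0 Fuv !eqxx]]).
  by lia.
have [col0 pc0] := IH F0 F0V F0s F0i F0d ltac:(lia).
have uv0 : u != v0 by apply/eqP => e; move: Fuv; rewrite e Firr.
have nF : ~~ F0 u v0 by rewrite /F0 !eqxx /= andbF.
have degK x : count (F0 x) V < D.+1 by rewrite ltnS.
have [col' pc'] := extend uV F0V F0s F0i pc0 uinV uv0 nF degK.
exists col'; apply: proper_ext pc' => x y.
rewrite /Fp /F0; case Fxy: (F x y) => /=.
  by case: (x == u); case: (y == v0); case: (x == v0); case: (y == u).
apply/negP => /orP [] /andP [/eqP ex /eqP ey]; subst x y.
  by rewrite Fuv in Fxy.
by rewrite Fsym Fuv in Fxy.
Qed.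

Import Order.TTheory GRing.Theory Num.Theory.

Lemma count_sum (T : Type) (P : pred T) s : count P s = \sum_(x <- s) (P x : nat).
Proof. by elim: s => [|x s IH]; rewrite ?big_nil ?big_cons //= IH. Qed.

Lemma sum_opt (V : seq nat) (a : option nat) (G : nat -> nat) : uniq V ->
  (forall z, a = Some z -> z \in V) ->
  \sum_(z <- V) (if a == Some z then G z else 0) = (if a is Some z then G z else 0).
Proof.
move=> uV; case: a => [z0|] h; last by rewrite big1.
rewrite (bigD1_seq z0) ?h //= eqxx big1 ?addn0 // => z zz0.
by case: eqP => // [[e]]; move: zz0; rewrite e eqxx.
Qed.

Section Hit.
Variables (V : seq nat) (G : rel nat) (S : nat -> bool) (M : nat -> option nat).
Hypotheses (uV : uniq V) (Girr : irreflexive G) (mM : is_matching V G M)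
  (GV : forall x y, G x y -> y \in V).

Lemma Msym u v : u \in V -> v \in V -> (M v == Some u) = (M u == Some v).
Proof.
move=> uin vin; apply/eqP/eqP => e.
  by case: (mM vin e).
by case: (mM uin e).
Qed.

Lemma hit_nat :
  \sum_(v <- V) (match M v with Some u => if v < u then (S v + S u)%N else 0 | None => 0 end)
  = count (fun v => S v && matched M v) V.
Proof.
have Mdom v z : v \in V -> M v = Some z -> z \in V.
  by move=> vin e; case: (mM vin e) => /GV.
pose g v := if M v is Some u then (if v < u then (S u : nat) else 0) else 0.
pose h u := if M u is Some v then (if v < u then (S u : nat) else 0) else 0.
have gh : \sum_(v <- V) g v = \sum_(u <- V) h u.
  transitivity (\sum_(v <- V) \sum_(u <- V) (if M v == Some u then (if v < u then (S u : nat) else 0) else 0)).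
    rewrite big_seq_cond [RHS]big_seq_cond; apply: eq_bigr => v /andP [vin _].
    by rewrite sum_opt // => z; apply: Mdom vin.
  rewrite exchange_big big_seq_cond [RHS]big_seq_cond; apply: eq_bigr => u /andP [uin _].
  transitivity (\sum_(v <- V) (if M u == Some v then (if v < u then (S u : nat) else 0) else 0)).
    rewrite big_seq_cond [RHS]big_seq_cond; apply: eq_bigr => v /andP [vin _].
    by rewrite Msym.
  by rewrite sum_opt // => z; apply: Mdom uin.
rewrite count_sum.
transitivity (\sum_(v <- V) ((if M v is Some u then (if v < u then (S v : nat) else 0) else 0) + g v)).
  by apply: eq_bigr => v _; rewrite /g; case: (M v) => // u; case: ifP.
rewrite big_split /= gh -big_split /=; rewrite big_seq_cond [RHS]big_seq_cond.
apply: eq_bigr => v /andP [vin _]; rewrite /h /matched.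
case e: (M v) => [u|] /=; last by rewrite andbF.
have uv : u != v by apply/eqP => uv; case: (mM vin e); rewrite uv Girr.
rewrite andbT; case: ltngtP => [_|_|e2]; [by rewrite addn0 | by [] | by move: uv; rewrite e2 eqxx].
Qed.

End Hit.

Lemma argmax_seq (h : nat -> nat) (x0 : nat) (s : seq nat) : x0 \in s ->
  exists2 c, c \in s & forall c', c' \in s -> h c' <= h c.
Proof.
elim: s x0 => [//|y s IH] x0 _.
case: s IH => [|z s'] IH.
  by exists y => [|c']; rewrite ?mem_head // inE => /eqP ->.
have [c cin cmax] := IH z (mem_head _ _).
case: (leqP (h y) (h c)) => hyc.
  exists c; first by rewrite inE cin orbT.
  by move=> c'; rewrite inE => /orP [/eqP ->|/cmax].
exists y; first exact: mem_head.
move=> c'; rewrite inE => /orP [/eqP ->//|/cmax hc]; by apply: leq_trans hc (ltnW hyc).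
Qed.

Lemma sum_const_iota K x : \sum_(c <- iota 0 K) x = K * x.
Proof. by rewrite big_const_seq count_predT size_iota iter_addn_0 mulnC. Qed.

Section CM.
Variables (V : seq nat) (K : nat) (G : rel nat) (col : nat -> nat -> nat) (S : nat -> bool).
Hypotheses (uV : uniq V) (GV : forall x y, G x y -> x \in V)
  (Gsym : symmetric G) (Girr : irreflexive G) (pc : proper K G col).

Definition Mc c v := if nbr V G col v c == v then None else Some (nbr V G col v c).

Lemma Mc_match c : is_matching V G (Mc c).
Proof.
move=> v y vin; rewrite /Mc; case: eqP => // ne [<-].
case: (nbr_spec V G col v c) => [[Gvy cy]|[_ e]]; last by case: ne.
split => //.
have e : nbr V G col (nbr V G col v c) c = v.
  apply: (nbr_eq GV Gsym pc); first by rewrite Gsym.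
  by rewrite -(col_sym pc Gvy).
rewrite /Mc e; case: eqP => // ev; move: Gvy; by rewrite -ev Girr.
Qed.

Lemma Mc_matched c v : matched (Mc c) v = ~~ miss V G col v c.
Proof.
rewrite /matched /Mc; case: (nbr_spec V G col v c) => [[Gvy cy]|[m e]].
  have -> : (nbr V G col v c == v) = false by apply/eqP => e; move: Gvy; rewrite e Girr.
  apply/esym/negP => /(missP col GV Gsym) /(_ _ Gvy); by rewrite cy eqxx.
by rewrite e eqxx m.
Qed.

Lemma used_count v : count (fun c => ~~ miss V G col v c) (iota 0 K) = count (G v) V.
Proof.
set cs := [seq col v y | y <- [seq y <- V | G v y]].
have ucs : uniq cs.
  rewrite map_inj_in_uniq ?filter_uniq // => y z; rewrite !mem_filter => /andP [Gy _] /andP [Gz _].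
  exact: (col_inj pc Gy Gz).
have memcs c : (c \in cs) = ~~ miss V G col v c.
  rewrite /miss negbK; apply/mapP/hasP => [[y]|[y yV /andP [Gy /eqP <-]]].
    by rewrite mem_filter => /andP [Gy yV] ->; exists y => //; rewrite Gy eqxx.
  by exists y => //; rewrite mem_filter Gy.
have -> : count (fun c => ~~ miss V G col v c) (iota 0 K) = count (mem cs) (iota 0 K).
  by apply: eq_count => c; rewrite /= memcs.
rewrite -size_filter -size_filter.
have -> : size [seq y <- V | G v y] = size cs by rewrite size_map.
apply: perm_size; apply: uniq_perm; rewrite ?filter_uniq ?iota_uniq // => c.
rewrite mem_filter mem_iota add0n /=; case ccs: (c \in cs) => //=.
by move: ccs => /mapP [y]; rewrite mem_filter => /andP [Gy _] ->; rewrite (col_lt pc Gy).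
Qed.

Lemma sum_hits : \sum_(c <- iota 0 K) count (fun v => S v && matched (Mc c) v) V
   = \sum_(v <- V) (S v * count (G v) V).
Proof.
under eq_bigr => c _ do rewrite count_sum.
rewrite exchange_big; apply: eq_bigr => v _.
rewrite -used_count count_sum big_distrr /=; apply: eq_bigr => c _.
by rewrite Mc_matched; case: (S v); rewrite ?mul1n ?mul0n.
Qed.

Lemma best : 0 < K -> exists c,
  \sum_(v <- V) (S v * count (G v) V) <= K * count (fun v => S v && matched (Mc c) v) V.
Proof.
move=> K0; set h := fun c => count (fun v => S v && matched (Mc c) v) V.
have [c cin cmax] := argmax_seq h (x0 := 0) (s := iota 0 K) ltac:(by rewrite mem_iota add0n K0).
exists c; rewrite -sum_hits -/h.
rewrite -(sum_const_iota K (h c)) big_seq_cond [X in _ <= X]big_seq_cond.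
by apply: leq_sum => c' /andP [/cmax h' _].
Qed.

End CM.

Local Open Scope ring_scope.

Definition Gs (S : nat -> bool) (E : rel nat) : rel nat := fun x y => E x y && (S x || S y).
Definition ws (R : numDomainType) (S : nat -> bool) : nat -> nat -> R :=
  fun x y => ((S x : nat) + (S y : nat))%:R.

Lemma ball_sub V (E1 E2 : rel nat) r v : subrel E1 E2 -> {subset ball V E1 r v <= ball V E2 r v}.
Proof.
move=> sub; elim: r => [//|r IH] x /=; rewrite !mem_filter => /andP [/orP [/IH xb|/hasP [z zb Ezx]] ->];
  rewrite andbT ?xb //; apply/orP; right; apply/hasP; exists z; [exact: IH|exact: sub].
Qed.

Lemma ball_V V E r v : v \in V -> {subset ball V E r v <= V}.
Proof.
move=> vV; case: r => [|r] x /=; first by rewrite inE => /eqP ->.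
by rewrite mem_filter => /andP [].
Qed.

Lemma ball_S V E r v x : x \in V -> x \in ball V E r v -> x \in ball V E r.+1 v.
Proof. by move=> xV xb /=; rewrite mem_filter xb xV. Qed.

Lemma ball_nb V (E : rel nat) r v x y : x \in ball V E r v -> y \in V -> E x y -> y \in ball V E r.+1 v.
Proof. by move=> xb yV Exy /=; rewrite mem_filter yV andbT orbC; apply/orP; left; apply/hasP; exists x. Qed.

Lemma two_le_size (V : seq nat) x y : uniq V -> x \in V -> y \in V -> x != y -> (2 <= size V)%N.
Proof.
move=> uV xV yV xy; have : uniq [:: x; y] by rewrite /= inE xy.
by move/uniq_leq_size => /(_ V); apply => z; rewrite !inE => /orP [] /eqP ->.
Qed.

Lemma AM_of_S (R : numDomainType) n k D c V E S el :
  S_class n k D V E S el -> (1 <= c)%N -> AM_class (R:=R) n k D c V (Gs S E) (fun _ => tt) (ws R S).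
Proof.
move=> [[[uV sV idV] [EV Eirr Esym]] dD] c1.
have GE x y : Gs S E x y -> E x y by case/andP.
split.
- split => //; split.
  + by move=> x y /GE /EV.
  + by move=> x; rewrite /Gs (negbTE (Eirr x)).
  + by move=> x y; rewrite /Gs Esym orbC.
- by move=> v vV; apply: leq_trans (dD v vV); apply: sub_count => y /GE.
- move=> x y /andP [_ Sxy]; rewrite /ws ltr0n; move: Sxy; by case: (S x); case: (S y).
- by move=> x y; rewrite /ws addnC.
move=> x y x' y' Gxy Gxy'; rewrite /ws -natrM ler_nat.
have /andP [xV yV] := EV _ _ (GE _ _ Gxy).
have xy : x != y by apply/eqP => e; move: (GE _ _ Gxy); rewrite e (negbTE (Eirr y)).
have n2 : (2 <= n)%N by rewrite -sV; apply: two_le_size xy.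
have nc : (n <= n ^ c)%N by case: c c1 => // c' _; rewrite expnS leq_pmulr // expn_gt0; lia.
have : (0 < (S x' : nat) + (S y' : nat))%N by move: Gxy' => /andP [_]; case: (S x'); case: (S y').
have : ((S x : nat) + (S y : nat) <= 2)%N by case: (S x); case: (S y).
move=> h1 h2; apply: leq_trans h1 _; apply: leq_trans (leq_trans n2 nc) _.
by rewrite leq_pmulr.
Qed.

Lemma mweight_hit (R : numDomainType) V G S M : uniq V -> irreflexive G ->
  is_matching V G M -> (forall x y, G x y -> y \in V) ->
  mweight V (ws R S) M = (count (fun v => S v && matched M v) V)%:R.
Proof.
move=> uV Gi mM GV; rewrite -(hit_nat S uV Gi mM GV) natr_sum /mweight.
by apply: eq_bigr => v _; case: (M v) => // u; case: ifP.
Qed.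

Theorem lemma2p6 (R : realFieldType) (n k D c T : nat) (eps : R) :
  0 < eps -> (1 <= c)%N ->
  (exists A : algo unit R,
      local_alg (AM_class (R:=R) n k D c) T A /\ AM_correct n k D c eps A) ->
  exists B : algo bool unit,
      local_alg (S_class n k D) T B /\ S_correct n k D eps B.
Proof.
move=> eps0 c1 [A [locA corA]].
exists (fun V E S el v => A V (Gs S E) (fun _ => tt) (ws R S) v); split.
  move=> V1 E1 S1 el1 V2 E2 S2 el2 v P1 P2 v1 v2 [sv1 sv2].
  apply: (locA _ _ _ _ _ _ _ _ v (AM_of_S R P1 c1) (AM_of_S R P2 c1) v1 v2); split => // x y T0 xb.
  have xb' : x \in ball V1 E1 T.-1 v by apply: ball_sub xb => a b /andP [].
  have [e1 e2] := sv2 x y T0 xb'.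
  have [[[_ _ _] [EV1 _ _]] _] := P1.
  have xV : x \in V1 by apply: ball_V xb'.
  have TT : T = T.-1.+1 by lia.
  have Sx : S1 x = S2 x by apply: sv1; rewrite TT; apply: ball_S.
  rewrite /Gs -e1; case E1xy: (E1 x y) => //=.
  have Sy : S1 y = S2 y.
    apply: sv1; rewrite TT; apply: (ball_nb xb') => //.
    by have /andP [] := EV1 _ _ E1xy.
  by rewrite /ws Sx Sy.
move=> V E S P /=.
have AM := AM_of_S R P c1.
have [mM maxM optM] := corA V (Gs S E) (ws R S) AM.
have [[[uV sV idV] [EV Eirr Esym]] dD] := P.
have GE x y : Gs S E x y -> E x y by case/andP.
have GV x y : Gs S E x y -> x \in V by move/GE/EV/andP => [].
have GVr x y : Gs S E x y -> y \in V by move/GE/EV/andP => [].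
have Gsym : symmetric (Gs S E) by move=> x y; rewrite /Gs Esym orbC.
have Girr : irreflexive (Gs S E) by move=> x; rewrite /Gs (negbTE (Eirr x)).
split.
  by move=> v u vin /(mM v u vin) [/GE Evu ->].
move=> delta hdelta.
set Dm := max_deg V E.
have degG x : (count (Gs S E x) V <= Dm)%N.
  case xV: (x \in V).
    apply: leq_trans (_ : deg V E x <= Dm)%N.
      by apply: sub_count => y /GE.
    by rewrite /Dm /max_deg; apply: (@leq_bigmax_seq _ V xpredT (fun v => deg V E v) x xV).
  have -> : count (Gs S E x) V = 0%N.
    apply/eqP; rewrite -leqn0 leqNgt -has_count; apply/hasP => [[y _ /GV]].
    by rewrite xV.
  by [].
have [col pc] := vizing uV GV Gsym Girr degG.
have [c0 hc0] := best S uV GV Gsym Girr pc (ltn0Sn Dm).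
set M := A V (Gs S E) (fun _ => tt) (ws R S).
set Mc0 := Mc V (Gs S E) col c0.
have mMc : is_matching V (Gs S E) Mc0 := @Mc_match V _ _ _ GV Gsym Girr pc c0.
have opt := optM Mc0 mMc.
rewrite (mweight_hit _ S uV Girr mMc GVr) (mweight_hit _ S uV Girr mM GVr) in opt.
set hM := count (fun v => S v && matched M v) V in opt *.
set hc := count (fun v => S v && matched Mc0 v) V in hc0 opt.
have lowS : (delta * count S V <= \sum_(v <- V) S v * count (Gs S E v) V)%N.
  rewrite count_sum big_distrr /= big_seq_cond [X in (_ <= X)%N]big_seq_cond.
  apply: leq_sum => v /andP [vin _]; case Sv: (S v); rewrite ?muln0 ?mul1n ?muln1 //.
  have -> : count (Gs S E v) V = deg V E v by apply: eq_count => y; rewrite /Gs Sv orTb andbT.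
  exact: hdelta.
have key : (delta * count S V <= Dm.+1 * hc)%N by apply: leq_trans lowS hc0.
have hcR : (delta%:R / Dm.+1%:R) * (count S V)%:R <= hc%:R :> R.
  rewrite mulrAC ler_pdivrMr ?ltr0n // -!natrM ler_nat; nia.
case: (lerP eps 1) => e1.
  apply: le_trans opt; rewrite -mulrA; apply: ler_wpM2l; first by rewrite subr_ge0.
  exact: hcR.
apply: le_trans (_ : 0 <= _); last by rewrite ler0n.
rewrite -mulrA; apply: mulr_le0_ge0; first by rewrite subr_le0 ltW.
by apply: mulr_ge0; [apply: divr_ge0|]; rewrite ler0n.
Qed.
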